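(* For any NOI-graph or COI-graph $G$ on $n$ vertices there exists a vector $\mathbf{v}\in\{-1,1\}^n$ in the kernel of the hybrid Laplacian $\mathcal{L}(G)$.
   Context: A hybrid graph $G=(V,E_L+E_Q)$ has a set $E_L$ of $L$-edges and a set $E_Q$ of $Q$-edges. Its hybrid Laplacian is $\mathcal{L}(G)=L(S_l)+Q(S_q)$ with $S_l=(V,E_L)$, $S_q=(V,E_Q)$, $L=D-A$ the signed Laplacian and $Q=D+A$ the signless Laplacian. $G$ is a NOI-graph if $S_q$ is bipartite and no vertex is incident to both a $Q$-edge and an $L$-edge. $G$ is a COI-graph if $S_q$ is bipartite with a bipartition $(P_1,P_2)$ of $V$ (every $Q$-edge joining $P_1$ to $P_2$) such that every $L$-edge joins two vertices in the same part. *)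

(* Defs.v *)
From HB Require Import structures.
From mathcomp Require Import all_boot all_order all_algebra.
Set Implicit Arguments. Unset Strict Implicit. Unset Printing Implicit Defensive.
Import Order.TTheory GRing.Theory Num.Theory.
Local Open Scope ring_scope.

Definition simple_edges (n : nat) (E : rel 'I_n) : Prop :=
  (forall i j, E i j = E j i) /\ (forall i, ~~ E i i).

Definition adjmx (R : nzRingType) (n : nat) (E : rel 'I_n) : 'M[R]_n :=
  \matrix_(i, j) (E i j)%:R.

Definition degmx (R : nzRingType) (n : nat) (E : rel 'I_n) : 'M[R]_n :=
  diag_mx (\row_i (#|[pred k | E i k]|)%:R).

Definition laplacian (R : nzRingType) (n : nat) (E : rel 'I_n) : 'M[R]_n :=
  degmx R E - adjmx R E.
Definition signless_laplacian (R : nzRingType) (n : nat) (E : rel 'I_n) : 'M[R]_n :=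
  degmx R E + adjmx R E.

Definition hybrid_laplacian (R : nzRingType) (n : nat) (EL EQ : rel 'I_n) : 'M[R]_n :=
  laplacian R EL + signless_laplacian R EQ.

Definition bipartite (n : nat) (E : rel 'I_n) : Prop :=
  exists P : {set 'I_n}, forall i j, E i j -> (i \in P) != (j \in P).

Definition NOI_graph (n : nat) (EL EQ : rel 'I_n) : Prop :=
  bipartite EQ /\
  forall v : 'I_n, ~ ((exists u, EQ v u) /\ (exists w, EL v w)).

Definition COI_graph (n : nat) (EL EQ : rel 'I_n) : Prop :=
  exists P : {set 'I_n},
    (forall i j, EQ i j -> (i \in P) != (j \in P)) /\
    (forall i j, EL i j -> (i \in P) = (j \in P)).

(* Main.v *)
Require Import Defs.
From HB Require Import structures.
From mathcomp Require Import all_boot all_order all_algebra.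
Import Order.TTheory GRing.Theory Num.Theory.
Local Open Scope ring_scope.

Lemma deg_sum (R : numDomainType) (n : nat) (E : rel 'I_n) i (x : R) :
  (#|[pred k | E i k]|)%:R * x = \sum_j (E i j)%:R * x.
Proof.
rewrite -[#|_|]sum1_card natr_sum mulr_suml big_mkcond /=.
by apply: eq_bigr => j _; rewrite inE; case: (E i j); rewrite ?mul0r ?mul1r.
Qed.

Lemma key (R : numDomainType) (n : nat) (EL EQ : rel 'I_n) (P : {set 'I_n}) :
  (forall i j, EQ i j -> (i \in P) != (j \in P)) ->
  (forall i j, EL i j -> (i \in P) = (j \in P)) ->
  exists v : 'cV[R]_n,
    (forall i, v i 0 = 1 \/ v i 0 = -1) /\
    hybrid_laplacian R EL EQ *m v = 0.
Proof.
move=> HQ HL.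
exists (\col_i (if i \in P then 1 else -1)); split.
  by move=> i; rewrite mxE; case: (i \in P); [left|right].
rewrite /hybrid_laplacian /laplacian /signless_laplacian !mulmxDl ?mulNmx /degmx !mul_diag_mx.
apply/matrixP => i k; rewrite (ord1 k) /adjmx !mxE !deg_sum.
under [X in _ - X + _]eq_bigr do rewrite !mxE.
under [X in _ + (_ + X)]eq_bigr do rewrite !mxE.
rewrite -sumrB -big_split /=.
rewrite -[RHS](addr0 0); congr (_ + _); apply: big1 => j _; rewrite -?mulrBr -?mulrDr.
  case ELij: (EL i j); last by rewrite mul0r.
  by rewrite (HL _ _ ELij) subrr mulr0.
case EQij: (EQ i j); last by rewrite mul0r.
have := HQ _ _ EQij.
by case: (i \in P); case: (j \in P) => //= _; rewrite mul1r ?subrr // addrC subrr.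
Qed.
Theorem lemmaD2 (R : numDomainType) (n : nat) (EL EQ : rel 'I_n) :
  simple_edges EL -> simple_edges EQ ->
  NOI_graph EL EQ \/ COI_graph EL EQ ->
  exists v : 'cV[R]_n,
    (forall i, v i 0 = 1 \/ v i 0 = -1) /\
    hybrid_laplacian R EL EQ *m v = 0.
Proof.
move=> [HLs _] [HQs _] [[[P HP] Hnoi]|[P [HQ HL]]]; last exact: key HQ HL.
pose P' := [set i in P | [exists u, EQ i u]].
apply: (@key R n EL EQ P').
  move=> i j e; rewrite !inE.
  have -> : [exists u, EQ i u] by apply/existsP; exists j.
  have -> : [exists u, EQ j u] by apply/existsP; exists i; rewrite HQs.
  by rewrite !andbT; apply: HP.
move=> i j e; rewrite !inE.
have -> : [exists u, EQ i u] = false.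
  apply/negbTE/negP => /existsP [u hu]; apply: (Hnoi i); split; [by exists u|by exists j].
have -> : [exists u, EQ j u] = false.
  apply/negbTE/negP => /existsP [u hu]; apply: (Hnoi j); split; [by exists u|].
  by exists i; rewrite HLs.
by rewrite !andbF.
Qed.
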